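(* Let $q\in(0,1)$, let $\alpha,p,j\ge0$ be integers and $0\le t\le p$. Then $$\sum_{M\in M^{(\alpha)}_{p,j}(t)}q^{\mathrm{cr}(M)}=\sum_{l=0}^{t}\sum_{i=0}^{l}q^{\,i(l-i)+(t-i)(j-i+\alpha)+(j-l+i)(t-l+i)}\frac{[t-l+i]_q!\,[t-i]_q!}{[t-l]_q!}\begin{bmatrix} p\\ t-i\end{bmatrix}_q\begin{bmatrix} p\\ t-l+i\end{bmatrix}_q\begin{bmatrix} \alpha+j\\ i\end{bmatrix}_q\begin{bmatrix} j\\ l-i\end{bmatrix}_q.$$
   Context: $[n]_q=\frac{1-q^n}{1-q}$, $[n]_q!=\prod_{m=1}^n[m]_q$, $\begin{bmatrix} n\\ m\end{bmatrix}_q=\frac{[n]_q!}{[m]_q![n-m]_q!}$ for $0\le m\le n$ and $=0$ if $m>n$ or $m<0$. Bipartite matchings: for integers $n,j,\alpha\ge0$, let $T_-=\{-\alpha-j,\dots,-1\}$, $T_+=\{1,\dots,n\}$ (top row), $B_-=\{-\tilde j,\dots,-\tilde 1\}$, $B_+=\{\tilde1,\dots,\tilde n\}$ (bottom row; $\tilde m$ is a formal copy of the integer $m$, bottom vertices compared via these integers). A bipartite matching is a set partition of $T_-\cup T_+\cup B_-\cup B_+$ into singletons (isolated vertices) and blocks $\{a,\tilde b\}$ with $a$ top, $\tilde b$ bottom (edges, written $(a,\tilde b)$). $M^{(\alpha)}_{n,j}$ is the set of such matchings with no edge between $T_-$ and $B_-$; $M^{(\alpha)}_{n,j}(l)$ its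 subset with exactly $l$ edges. The crossing number $\mathrm{cr}(M)$ is the total number of: (C1) unordered pairs of edges $(a,\tilde b),(c,\tilde d)$ with $a<c$ and $d<b$; (C2) pairs of an edge $(a,\tilde b)$ and an isolated top vertex $c$ with $c<a$; (C3) pairs of an edge $(a,\tilde b)$ and an isolated bottom vertex $\tilde d$ with $d<b$. *)

(* Defs.v *)
From HB Require Import structures.
From mathcomp Require Import all_boot all_order all_algebra.
Set Implicit Arguments. Unset Strict Implicit. Unset Printing Implicit Defensive.
Import Order.TTheory GRing.Theory Num.Theory.

Local Open Scope ring_scope.

Definition qint (R : fieldType) (q : R) (n : nat) : R := (1 - q ^+ n) / (1 - q).
Definition qfact (R : fieldType) (q : R) (n : nat) : R :=
  \prod_(1 <= m < n.+1) qint q m.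
Definition qbinom (R : fieldType) (q : R) (n m : nat) : R :=
  if (m <= n)%N then qfact q n / (qfact q m * qfact q (n - m)) else 0.

(* Top row: T_- = {-alpha-j,...,-1} and T_+ = {1,...,n}, encoded by
   'I_(alpha+j+n): index k < alpha+j is the vertex k-(alpha+j), index
   k >= alpha+j is the vertex k-(alpha+j)+1.  Bottom row: B_- = {-~j..-~1},
   B_+ = {~1..~n}, encoded by 'I_(j+n) likewise. *)
Definition topV (n j alpha : nat) := 'I_(alpha + j + n).
Definition botV (n j : nat) := 'I_(j + n).

Definition topz (n j alpha : nat) (k : topV n j alpha) : int :=
  if (k < alpha + j)%N then (k%:Z - (alpha + j)%:Z)%R else ((k - (alpha + j)).+1)%:Z.
Definition botz (n j : nat) (k : botV n j) : int :=
  if (k < j)%N then (k%:Z - j%:Z)%R else ((k - j).+1)%:Z.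

Definition in_Tminus (n j alpha : nat) (k : topV n j alpha) : bool := (k < alpha + j)%N.
Definition in_Bminus (n j : nat) (k : botV n j) : bool := (k < j)%N.

(* A bipartite matching is determined by its set of edges (a, ~b):
   every vertex lies in at most one edge; the remaining vertices are the
   singleton blocks. *)
Definition is_matching (n j alpha : nat)
    (M : {set topV n j alpha * botV n j}) : bool :=
  [forall e1 in M, forall e2 in M,
     ((e1.1 == e2.1) ==> (e1 == e2)) && ((e1.2 == e2.2) ==> (e1 == e2))]
  && [forall e in M, ~~ (in_Tminus e.1 && in_Bminus e.2)].

Definition isolated_top (n j alpha : nat) (M : {set topV n j alpha * botV n j})
    (c : topV n j alpha) : bool := [forall e in M, e.1 != c].
Definition isolated_bot (n j alpha : nat) (M : {set topV n j alpha * botV n j})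
    (d : botV n j) : bool := [forall e in M, e.2 != d].

(* Crossing number: (C1) pairs of edges (a,~b),(c,~d) with a<c, d<b
   (each unordered pair counted once, via the orientation a<c);
   (C2) edge (a,~b) and isolated top c with c<a;
   (C3) edge (a,~b) and isolated bottom ~d with d<b. *)
Definition cr (n j alpha : nat) (M : {set topV n j alpha * botV n j}) : nat :=
  (#|[set p : (topV n j alpha * botV n j) * (topV n j alpha * botV n j) |
       [&& p.1 \in M, p.2 \in M, (topz p.1.1 < topz p.2.1)%R
         & (botz p.2.2 < botz p.1.2)%R]]|
  + #|[set p : (topV n j alpha * botV n j) * topV n j alpha |
       [&& p.1 \in M, isolated_top M p.2 & (topz p.2 < topz p.1.1)%R]]|
  + #|[set p : (topV n j alpha * botV n j) * botV n j |
       [&& p.1 \in M, isolated_bot M p.2 & (botz p.2 < botz p.1.2)%R]]|)%N.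

Definition cr_genfun (R : fieldType) (q : R) (alpha n j l : nat) : R :=
  \sum_(M : {set topV n j alpha * botV n j} | is_matching M && (#|M| == l)%N)
    q ^+ cr M.

(* Main.v *)
Require Import Defs.
From HB Require Import structures.
From mathcomp Require Import all_boot all_order all_algebra zify ring lra.
Import Order.TTheory GRing.Theory Num.Theory.
Set Implicit Arguments. Unset Strict Implicit. Unset Printing Implicit Defensive.

Lemma ltn_lift n (i : 'I_n.+1) (x y : 'I_n) : (lift i x < lift i y)%N = (x < y)%N.
Proof. by rewrite /= !ltnNge leq_bump2. Qed.

Lemma ltn_bump2 h x y : (bump h x < bump h y)%N = (x < y)%N.
Proof. by rewrite !ltnNge leq_bump2. Qed.

Lemma bump_lt_self (h x : nat) : (bump h x < h)%N = (x < h)%N.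
Proof. rewrite /bump; case: (leqP h x) => /= H; lia. Qed.

Lemma lift_lt_self n (i : 'I_n.+1) (x : 'I_n) : (lift i x < i)%N = (x < i)%N.
Proof. rewrite /= /bump; case: (leqP i x) => /= H; lia. Qed.

Section Comb.
Variables (R : comPzRingType) (q : R).

Definition uniqM N M (S : {set 'I_N * 'I_M}) : bool :=
  [forall e1 in S, forall e2 in S,
     ((e1.1 == e2.1) ==> (e1 == e2)) && ((e1.2 == e2.2) ==> (e1 == e2))].
Definition forbM N M A B (S : {set 'I_N * 'I_M}) : bool :=
  [forall e in S, ~~ ((e.1 < A)%N && (e.2 < B)%N)].
Definition mat N M A B (S : {set 'I_N * 'I_M}) := uniqM S && forbM A B S.
Definition isoT N M (S : {set 'I_N * 'I_M}) c := [forall e in S, e.1 != c].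
Definition isoB N M (S : {set 'I_N * 'I_M}) d := [forall e in S, e.2 != d].
Definition crs N M (S : {set 'I_N * 'I_M}) : nat :=
  \sum_(e in S) (\sum_(f in S) ((e.1 < f.1) && (f.2 < e.2))%N
     + \sum_(c < N) (isoT S c && (c < e.1)%N) + \sum_(d < M) (isoB S d && (d < e.2)%N)).
Definition Fg N M A B t : R :=
  \sum_(S : {set 'I_N * 'I_M} | mat A B S && (#|S| == t)) q ^+ crs S.

Lemma uniqMP N M (S : {set 'I_N * 'I_M}) :
  reflect (forall e1 e2, e1 \in S -> e2 \in S ->
             (e1.1 = e2.1 -> e1 = e2) /\ (e1.2 = e2.2 -> e1 = e2)) (uniqM S).
Proof.
apply: (iffP forall_inP) => H.
- move=> e1 e2 h1 h2; have /forall_inP/(_ e2 h2)/andP[H1 H2] := H e1 h1.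
  by split=> E; apply/eqP; [move: H1|move: H2]; rewrite E eqxx.
- move=> e1 h1; apply/forall_inP => e2 h2; have [H1 H2] := H e1 e2 h1 h2.
  by apply/andP; split; apply/implyP => /eqP E; apply/eqP; auto.
Qed.

Lemma forall_imset (T U : finType) (f : T -> U) (S : {set T}) (P : pred U) :
  [forall e in f @: S, P e] = [forall e in S, P (f e)].
Proof.
apply/forall_inP/forall_inP => H x Hx; first by apply: H; apply: imset_f.
by case/imsetP: Hx => y Hy ->; apply: H.
Qed.

Lemma forall_setU1 (T : finType) (a : T) (S : {set T}) (P : pred T) :
  [forall e in a |: S, P e] = P a && [forall e in S, P e].
Proof.
apply/forall_inP/andP => [H|[Ha H] x]; first split.
- by apply: H; rewrite setU11.
- by apply/forall_inP => x Hx; apply: H; rewrite setU1r.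
- by case/setU1P => [->//|]; move: x; apply/forall_inP.
Qed.


Section Maps.
Variables N M : nat.
Implicit Types (S : {set 'I_N * 'I_M}).

Definition l1 (e : 'I_N * 'I_M) : 'I_N.+1 * 'I_M := (lift ord0 e.1, e.2).
Definition h1 S : {set 'I_N.+1 * 'I_M} := l1 @: S.
Definition h1' (S : {set 'I_N.+1 * 'I_M}) : {set 'I_N * 'I_M} := [set e | l1 e \in S].

Lemma l1_inj : injective l1.
Proof. move=> [a b] [c d]; rewrite /l1 /= => /eqP; rewrite xpair_eqE => /andP[/eqP/lift_inj -> /eqP ->] //. Qed.

Lemma mem_h1 S e : (l1 e \in h1 S) = (e \in S).
Proof. by rewrite mem_imset //; apply: l1_inj. Qed.

Lemma h1'K S : h1' (h1 S) = S.
Proof. by apply/setP => e; rewrite inE mem_h1. Qed.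

Lemma h1K (S : {set 'I_N.+1 * 'I_M}) : isoT S ord0 -> h1 (h1' S) = S.
Proof.
move=> /forall_inP Hi; apply/setP => [[a b]]; apply/idP/idP.
- by case/imsetP => e; rewrite inE => He ->.
- move=> Hab; have := Hi _ Hab => /= Ha.
  case: (unliftP ord0 a) Ha Hab => [a' ->|->]; last by rewrite eqxx.
  by move=> _ Hab; apply/imsetP; exists (a', b); rewrite ?inE.
Qed.

Lemma card_h1 S : #|h1 S| = #|S|.
Proof. by rewrite card_imset //; apply: l1_inj. Qed.

Lemma isoT_h1_0 S : isoT (h1 S) ord0.
Proof. by rewrite /isoT /h1 forall_imset; apply/forall_inP => e _ /=. Qed.

Lemma isoT_h1 S c : isoT (h1 S) (lift ord0 c) = isoT S c.
Proof. by rewrite /isoT /h1 forall_imset; apply: eq_forallb => e /=; rewrite (inj_eq lift_inj). Qed.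

Lemma isoB_h1 S d : isoB (h1 S) d = isoB S d.
Proof. by rewrite /isoB /h1 forall_imset. Qed.

Lemma crs_h1 S : crs (h1 S) = (#|S| + crs S)%N.
Proof.
rewrite /crs big_imset /=; last by move=> x y _ _; apply: l1_inj.
rewrite -sum1_card -big_split /=; apply: eq_bigr => e _.
rewrite big_imset /=; last by move=> x y _ _; apply: l1_inj.
rewrite big_ord_recl isoT_h1_0 /= /bump.
under eq_bigr do rewrite !leq0n !add1n ltnS.
under [in X in (_ + (_ + X) + _)%N]eq_bigr do rewrite isoT_h1 /bump !leq0n !add1n ltnS.
under [in X in (_ + _ + X)%N]eq_bigr do rewrite isoB_h1.
rewrite /=; lia.
Qed.

Lemma uniqM_h1 S : uniqM (h1 S) = uniqM S.
Proof.
apply/uniqMP/uniqMP => H e1 e2 h1 h2.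
- have [H1 H2] := H (l1 e1) (l1 e2) (imset_f _ h1) (imset_f _ h2).
  by split=> E; apply: l1_inj; [apply: H1; rewrite /= E | apply: H2].
- case/imsetP: h1 => x1 hx1 ->; case/imsetP: h2 => x2 hx2 ->.
  have [H1 H2] := H x1 x2 hx1 hx2.
  by split=> /= E; congr l1; [apply: H1; exact: lift_inj E | apply: H2].
Qed.

Lemma forbM_h1 A B S : forbM A B (h1 S) = forbM A.-1 B S.
Proof.
rewrite /forbM /h1 forall_imset; apply: eq_forallb => e /=.
by rewrite /bump leq0n add1n; case: A => //= A; rewrite ltnS.
Qed.

End Maps.

Lemma sum_lt_min n x : (\sum_(d < n) (d < x) = minn x n)%N.
Proof.
elim: n => [|n IH]; first by rewrite big_ord0 minn0.
rewrite big_ord_recr /= IH; case: (ltnP n x) => H; lia.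
Qed.

Lemma sum_snd_lt N M (S : {set 'I_N * 'I_M}) x : uniqM S ->
  (\sum_(f in S) (f.2 < x) + \sum_(d < M) (isoB S d && (d < x)) = minn x M)%N.
Proof.
move/uniqMP=> U.
rewrite (partition_big (fun f => f.2) predT) //= -sum_lt_min -big_split /=.
apply: eq_bigr => d _.
case Hd: (isoB S d).
- rewrite big_pred0 //= => f; apply/andP => -[hf /eqP hfd].
  by move/forall_inP: Hd => /(_ f hf); rewrite hfd eqxx.
- move/negbT/forall_inPn: Hd => [f0 hf0]; rewrite negbK => /eqP h0.
  rewrite (big_pred1 f0) /=; first by rewrite h0 addn0.
  move=> f; apply/andP/eqP => [[hf /eqP hfd]|->]; last by rewrite hf0 h0.
  by case: (U f f0 hf hf0) => _; apply; rewrite hfd h0.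
Qed.

Section Maps2.
Variables (N M : nat) (b0 : 'I_M.+1).
Implicit Types (S : {set 'I_N * 'I_M}).

Definition g2 (e : 'I_N * 'I_M) : 'I_N.+1 * 'I_M.+1 := (lift ord0 e.1, lift b0 e.2).
Definition h2 S : {set 'I_N.+1 * 'I_M.+1} := (ord0, b0) |: (g2 @: S).
Definition h2' (S : {set 'I_N.+1 * 'I_M.+1}) : {set 'I_N * 'I_M} := [set e | g2 e \in S].

Lemma g2_inj : injective g2.
Proof. move=> [a b] [c d]; rewrite /g2 /= => /eqP; rewrite xpair_eqE => /andP[/eqP/lift_inj -> /eqP/lift_inj ->] //. Qed.

Lemma g2_neq e : (ord0, b0) != g2 e.
Proof. by rewrite /g2 xpair_eqE negb_and neq_lift. Qed.

Lemma notin_h2 S : (ord0, b0) \notin g2 @: S.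
Proof. by apply/imsetP => -[e _ /eqP]; rewrite (negbTE (g2_neq e)). Qed.

Lemma mem_h2 S e : (g2 e \in h2 S) = (e \in S).
Proof. by rewrite /h2 in_setU1 eq_sym (negbTE (g2_neq e)) /= mem_imset //; apply: g2_inj. Qed.

Lemma h2'K S : h2' (h2 S) = S.
Proof. by apply/setP => e; rewrite inE mem_h2. Qed.

Lemma h2K (S : {set 'I_N.+1 * 'I_M.+1}) : uniqM S -> (ord0, b0) \in S -> h2 (h2' S) = S.
Proof.
move=> /uniqMP U H0; apply/setP => [[a b]]; apply/idP/idP.
- by case/setU1P => [->//|]; case/imsetP => e; rewrite inE => He ->.
- move=> Hab; apply/setU1P.
  have [Ua Ub] := U _ _ Hab H0.
  case: (unliftP ord0 a) => [a' Ea|Ea]; last by left; apply: Ua; rewrite Ea.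
  case: (unliftP b0 b) => [b' Eb|Eb]; last by left; apply: Ub; rewrite Eb.
  by right; apply/imsetP; exists (a', b'); rewrite ?inE /g2 /= -?Ea -?Eb.
Qed.

Lemma card_h2 S : #|h2 S| = #|S|.+1.
Proof. by rewrite cardsU1 notin_h2 card_imset //; apply: g2_inj. Qed.

Lemma isoT_h2_0 S : isoT (h2 S) ord0 = false.
Proof. by rewrite /isoT /h2 forall_setU1 eqxx. Qed.

Lemma isoT_h2 S c : isoT (h2 S) (lift ord0 c) = isoT S c.
Proof.
rewrite /isoT /h2 forall_setU1 forall_imset /=.
by apply: eq_forallb => e /=; rewrite (inj_eq lift_inj).
Qed.

Lemma isoB_h2_b0 S : isoB (h2 S) b0 = false.
Proof. by rewrite /isoB /h2 forall_setU1 eqxx. Qed.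

Lemma isoB_h2 S d : isoB (h2 S) (lift b0 d) = isoB S d.
Proof.
rewrite /isoB /h2 forall_setU1 forall_imset /= neq_lift /=.
by apply: eq_forallb => e /=; rewrite (inj_eq lift_inj).
Qed.

Lemma uniqM_h2 S : uniqM (h2 S) = uniqM S.
Proof.
apply/uniqMP/uniqMP => H e1 e2 h1 h2.
- have [H1 H2] := H (g2 e1) (g2 e2) (setU1r _ (imset_f _ h1)) (setU1r _ (imset_f _ h2)).
  by split=> E; apply: g2_inj; [apply: H1; rewrite /= E | apply: H2; rewrite /= E].
- case/setU1P: h1 => [->|]; case/setU1P: h2 => [->|].
  all: try by [].
  + case/imsetP => x2 _ -> /=; split=> E.
    * by have := neq_lift ord0 x2.1; rewrite -E eqxx.
    * by have := neq_lift b0 x2.2; rewrite -E eqxx.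
  + case/imsetP => x1 _ -> /=; split=> E.
    * by have := neq_lift ord0 x1.1; rewrite E eqxx.
    * by have := neq_lift b0 x1.2; rewrite E eqxx.
  + case/imsetP => x2 hx2 ->; case/imsetP => x1 hx1 ->.
    have [H1 H2] := H x1 x2 hx1 hx2.
    by split=> /= E; congr g2; [apply: H1; exact: lift_inj E | apply: H2; exact: lift_inj E].
Qed.

Lemma forbM_h2 A B S : (0 < A)%N || (B == 0)%N ->
  forbM A B (h2 S) = (B <= b0)%N && forbM A.-1 B S.
Proof.
move=> HAB; rewrite /forbM /h2 forall_setU1 forall_imset /=.
have -> : ~~ ((0 < A)%N && (b0 < B)%N) = (B <= b0)%N.
  by case/orP: HAB => [->|/eqP->]; [rewrite andTb -leqNgt | rewrite ltn0 andbF].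
case: (leqP B b0) => HB //; rewrite andTb; apply: eq_forallb => e.
rewrite /bump leq0n add1n; case: A {HAB} => [|A] //=; rewrite ltnS.
congr (_ ==> ~~ (_ && _)); case: (leqP b0 e.2) => /= H; lia.
Qed.

Lemma crs_h2 S : uniqM S -> crs (h2 S) = (b0 + crs S)%N.
Proof.
move=> U.
rewrite /crs /h2 big_setU1 ?notin_h2 //= big_imset /=; last by move=> x y _ _; apply: g2_inj.
congr (_ + _)%N; last first.
  apply: eq_bigr => e _.
  rewrite big_setU1 ?notin_h2 //= big_imset /=; last by move=> x y _ _; apply: g2_inj.
  rewrite big_ord_recl isoT_h2_0 (bigD1_ord b0) //= isoB_h2_b0 /= !add0n.
  under eq_bigr do rewrite !ltn_bump2.
  under [in X in (_ + X + _)%N]eq_bigr do rewrite isoT_h2 ltn_bump2.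
  under [in X in (_ + _ + X)%N]eq_bigr do rewrite isoB_h2 ltn_bump2.
  by [].
rewrite big_setU1 ?notin_h2 //= big_imset /=; last by move=> x y _ _; apply: g2_inj.
rewrite add0n.
rewrite [X in (_ + X + _)%N]big1 ?addn0; last by move=> c _; rewrite /= ltn0 andbF.
rewrite (bigD1_ord b0) //= isoB_h2_b0 /= add0n.
under eq_bigr do rewrite bump_lt_self.
under [in X in (_ + X)%N]eq_bigr do rewrite isoB_h2 bump_lt_self.
rewrite sum_snd_lt //; apply/minn_idPl; rewrite -ltnS; exact: ltn_ord.
Qed.

End Maps2.
End Comb.

Section Rec.
Variables (R : comPzRingType) (q : R).
Local Open Scope ring_scope.
Local Notation Fg := (Fg q).

Lemma Fg_t0 N M A B : Fg N M A B 0 = 1.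
Proof.
rewrite /Fg (big_pred1 set0); first by rewrite /crs big_set0 expr0.
move=> S; rewrite cards_eq0 /=; apply/andP/eqP => [[_ /eqP]//|->]; split=> //.
by apply/andP; split; apply/forall_inP => e; rewrite inE.
Qed.

Lemma card_set_le (T : finType) (S : {set T}) : (#|S| <= #|T|)%N.
Proof. exact: max_card. Qed.

Lemma Fg_M0 N A B t : Fg N 0 A B t.+1 = 0.
Proof.
rewrite /Fg big_pred0 // => S; apply/andP => -[_ /eqP E].
by have := card_set_le S; rewrite E card_prod !card_ord muln0.
Qed.

Lemma Fg_N0 M A B t : Fg 0 M A B t.+1 = 0.
Proof.
rewrite /Fg big_pred0 // => S; apply/andP => -[_ /eqP E].
by have := card_set_le S; rewrite E card_prod !card_ord mul0n.
Qed.

Lemma Fg_A0 N M B t : Fg N M 0 B t = Fg N M 0 0 t.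
Proof.
apply: eq_bigl => S; rewrite /mat /forbM.
by congr (_ && _ && _); apply: eq_forallb => e.
Qed.

Lemma Fg_iso N M A B t :
  \sum_(S : {set 'I_N.+1 * 'I_M} | (mat A B S && (#|S| == t)%N) && isoT S ord0) q ^+ crs S
  = q ^+ t * Fg N M A.-1 B t.
Proof.
rewrite (reindex_onto (@h1 N M) (@h1' N M)); last by move=> S /andP[_]; apply: h1K.
rewrite /Fg big_distrr /=; apply: eq_big => S.
- rewrite h1'K eqxx andbT isoT_h1_0 andbT /mat uniqM_h1 forbM_h1 card_h1 //.
- by move=> /andP[/andP[/andP[_ /eqP Ht] _] _]; rewrite crs_h1 -Ht card_h1 exprD.
Qed.

Definition pickb N M (S : {set 'I_N.+1 * 'I_M.+1}) : 'I_M.+1 :=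
  odflt ord0 [pick b | (ord0, b) \in S].

Lemma Fg_match N M A B t : (0 < A)%N || (B == 0)%N ->
  \sum_(S : {set 'I_N.+1 * 'I_M.+1} | (mat A B S && (#|S| == t.+1)%N) && ~~ isoT S ord0) q ^+ crs S
  = (\sum_(b < M.+1 | (B <= b)%N) q ^+ b) * Fg N M A.-1 B t.
Proof.
move=> HAB.
rewrite (partition_big (@pickb N M) predT) //= big_distrl /= [RHS]big_mkcond /=.
apply: eq_bigr => b0 _.
have -> : \sum_(S : {set 'I_N.+1 * 'I_M.+1} | ((mat A B S && (#|S| == t.+1)%N) && ~~ isoT S ord0) && (pickb S == b0))
   q ^+ crs S =
   \sum_(S : {set 'I_N.+1 * 'I_M.+1} | (mat A B S && (#|S| == t.+1)%N) && ((ord0, b0) \in S)) q ^+ crs S.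
  apply: eq_bigl => S; case HS: (mat A B S && _) => //=.
  move/andP: HS => [/andP[U _] _]; move/uniqMP: U => U.
  rewrite /pickb; case: pickP => [b Hb|H0] /=.
  - have -> : ~~ isoT S ord0 by apply/forall_inPn; exists (ord0, b) => //=; rewrite eqxx.
    apply/eqP/idP => [<-//|H]; have [H1 _] := U _ _ H Hb.
    by case: (H1 erefl) => ->.
  - have Hi : isoT S ord0.
      apply/forall_inP => -[a b] Hab /=; apply/eqP => Ea.
      by have := H0 b; rewrite /= -Ea Hab.
    by rewrite Hi (H0 b0).
rewrite (reindex_onto (@h2 N M b0) (@h2' N M b0)); last first.
  by move=> S /andP[/andP[/andP[U _] _]]; apply: h2K.
case: ifP => Hb.
- rewrite /Fg big_distrr /=; apply: eq_big => S.
  + rewrite h2'K eqxx andbT setU11 andbT /mat uniqM_h2 forbM_h2 // card_h2 Hb /=.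
    by rewrite eqSS.
  + move=> /andP[/andP[/andP[/andP[U _] _] _] _]; rewrite uniqM_h2 in U.
    by rewrite crs_h2 // exprD.
- rewrite big_pred0 // => S; rewrite /mat forbM_h2 // Hb /=.
  by rewrite !andbF.
Qed.

Lemma Fg_rec N M A B t : (0 < A)%N || (B == 0)%N ->
  Fg N.+1 M.+1 A B t.+1 = q ^+ t.+1 * Fg N M.+1 A.-1 B t.+1
    + (\sum_(b < M.+1 | (B <= b)%N) q ^+ b) * Fg N M A.-1 B t.
Proof.
move=> HAB; rewrite {1}/Fg (bigID (fun S => isoT S ord0)) /=.
by rewrite Fg_iso Fg_match.
Qed.

End Rec.

Section Alg.
Variables (R : comNzRingType) (q : R).
Local Open Scope ring_scope.
Local Notation Fg := (Fg q).

Definition qi n : R := \sum_(s < n) q ^+ s.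
Definition ff m k : R := \prod_(s < k) qi (m - s)%N.
Fixpoint gb n k : R := match k with 0 => 1 | k'.+1 =>
  match n with 0 => 0 | n'.+1 => q ^+ k'.+1 * gb n' k'.+1 + gb n' k' end end.

Lemma gb_small n k : (n < k)%N -> gb n k = 0.
Proof.
elim: n k => [|n IH] [|k] //= H.
by rewrite !IH ?mulr0 ?add0r // ltnW.
Qed.

Lemma gbn0 n : gb n 0 = 1. Proof. by case: n. Qed.
Lemma gbSS n k : gb n.+1 k.+1 = q ^+ k.+1 * gb n k.+1 + gb n k. Proof. by []. Qed.

Lemma ff0 m : ff m 0 = 1. Proof. by rewrite /ff big_ord0. Qed.
Lemma ffSS m k : ff m.+1 k.+1 = qi m.+1 * ff m k.
Proof. by rewrite /ff big_ord_recl subn0; congr (_ * _); apply: eq_bigr => i _; rewrite lift0 subSS. Qed.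
Lemma ff0S k : ff 0 k.+1 = 0.
Proof. by rewrite /ff big_ord_recl /qi big_ord0 mul0r. Qed.

Lemma qi0 : qi 0 = 0. Proof. by rewrite /qi big_ord0. Qed.

Lemma sum_geq B n : \sum_(b < B + n | (B <= b)%N) q ^+ b = q ^+ B * qi n.
Proof.
elim: n => [|n IH].
  by rewrite qi0 mulr0 big_pred0 // => b; have := ltn_ord b; move: (nat_of_ord b) => x Hx; lia.
rewrite big_mkcond /= addnS big_ord_recr /= -big_mkcond /= IH leq_addr.
by rewrite /qi big_ord_recr /= mulrDr -exprD.
Qed.

Lemma Fg_G n m t : Fg n m 0 0 t = ff m t * gb n t.
Proof.
elim: n m t => [|n IH] m [|t].
- by rewrite Fg_t0 ff0 mulr1.
- by rewrite Fg_N0 mulr0.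
- by rewrite Fg_t0 ff0 mulr1.
case: m => [|m]; first by rewrite Fg_M0 ff0S mul0r.
rewrite Fg_rec //= !IH.
have -> : \sum_(b < m.+1 | (0 <= b)%N) q ^+ b = qi m.+1 by [].
rewrite ffSS; ring.
Qed.


Lemma expandA A n1 B n2 t :
  Fg (A + n1) (B + n2) A B t =
  \sum_(i < t.+1) q ^+ ((A - i) * (t - i) + i * B)%N * ff n2 i * gb A i
     * Fg n1 (B + n2 - i)%N 0 0 (t - i)%N.
Proof.
elim: A n2 t => [|A IH] n2 t.
  rewrite big_ord_recl big1 ?addr0; last first.
    by move=> i _; rewrite (@gb_small 0) ?mulr0 ?mul0r // lift0.
  by rewrite /= !subn0 !mul0n add0n expr0 mul1r ff0 mulr1 mul1r Fg_A0.
case: t => [|t].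
  by rewrite Fg_t0 big_ord_recl big_ord0 addr0 /= Fg_t0 ?ff0 ?gbn0 !mulr1 muln0 mul0n expr0.
rewrite addSn.
case E: (B + n2)%N => [|M].
  have [HB Hn] : B = 0%N /\ n2 = 0%N by lia.
  subst; rewrite Fg_M0 big1 // => i _.
  case: i => [[|i] Hi] /=; first by rewrite Fg_M0 mulr0.
  by rewrite ff0S mulr0 !mul0r.
rewrite Fg_rec // -E sum_geq.
case: n2 E => [|n2] E.
  rewrite qi0 mulr0 mul0r addr0 IH big_ord_recl [RHS]big_ord_recl.
  rewrite !big1 ?addr0; first last.
  - by move=> i _; rewrite lift0 ff0S mulr0 !mul0r.
  - by move=> i _; rewrite lift0 ff0S mulr0 !mul0r.
  rewrite /= !subn0 !ff0 !gbn0 !mulr1 !mul0n !addn0 mulrA -exprD.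
  by congr (_ ^+ _ * _); rewrite mulSn.
have -> : M = (B + n2)%N by lia.
rewrite !IH big_ord_recl [RHS]big_ord_recl mulrDr -addrA; congr (_ + _).
  rewrite /= !subn0 !ff0 !gbn0 !mulr1 !mul0n !addn0 mulrA -exprD.
  by congr (_ ^+ _ * _); rewrite mulSn.
rewrite (big_distrr (q ^+ t.+1)) (big_distrr (q ^+ B * qi n2.+1)) -big_split /=; apply: eq_bigr => j _.
rewrite /bump leq0n add1n !add0n ffSS !subSS addnS subSS.
set X := Fg _ _ _ _ _.
case: (ltnP j A) => HjA; last first.
  rewrite (@gb_small A j.+1) ?ltnS // !mulr0 !mul0r mulr0 add0r ?addr0.
  transitivity (q ^+ B * q ^+ ((A - j) * (t - j) + j * B) * (qi n2.+1 * ff n2 j * gb A j * X)).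
    by ring.
  have -> : q ^+ B * q ^+ ((A - j) * (t - j) + j * B) = q ^+ ((A - j) * (t - j) + j.+1 * B).
    by rewrite -exprD mulSn; congr (_ ^+ _); lia.
  ring.
have Hjt : (j <= t)%N by rewrite -ltnS.
transitivity (q ^+ t.+1 * q ^+ ((A - j.+1) * (t - j) + j.+1 * B) * (qi n2.+1 * ff n2 j * gb A j.+1 * X)
   + q ^+ B * q ^+ ((A - j) * (t - j) + j * B) * (qi n2.+1 * ff n2 j * gb A j * X)).
  by ring.
have -> : q ^+ t.+1 * q ^+ ((A - j.+1) * (t - j) + j.+1 * B) =
          q ^+ ((A - j) * (t - j) + j.+1 * B) * q ^+ j.+1.
  rewrite -!exprD; congr (_ ^+ _).
  have -> : (A - j = (A - j.+1).+1)%N by lia.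
  rewrite mulSn; lia.
have -> : q ^+ B * q ^+ ((A - j) * (t - j) + j * B) = q ^+ ((A - j) * (t - j) + j.+1 * B).
  by rewrite -exprD mulSn; congr (_ ^+ _); lia.
ring.
Qed.
End Alg.

Lemma topz_lt n j alpha (x y : topV n j alpha) : (topz x < topz y)%R = (x < y)%N.
Proof.
rewrite /topz; case: ifP => Hx; case: ifP => Hy; lia.
Qed.

Lemma botz_lt n j (x y : botV n j) : (botz x < botz y)%R = (x < y)%N.
Proof.
rewrite /botz; case: ifP => Hx; case: ifP => Hy; lia.
Qed.

Lemma card_pairs (T1 T2 : finType) (S : {set T1}) (P : T1 -> T2 -> bool) :
  #|[set p : T1 * T2 | (p.1 \in S) && P p.1 p.2]| = (\sum_(x in S) \sum_(y : T2) P x y)%N.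
Proof.
rewrite -sum1_card big_mkcond /=.
transitivity (\sum_(x : T1) \sum_(y : T2) (if (x \in S) && P x y then 1 else 0))%N.
  by rewrite pair_bigA; apply: eq_bigr => -[x y] _; rewrite inE.
rewrite [RHS]big_mkcond /=; apply: eq_bigr => x _.
case: (x \in S) => /=; first by apply: eq_bigr => y _; case: (P x y).
by rewrite big1.
Qed.

Lemma cr_crs n j alpha (M : {set topV n j alpha * botV n j}) : cr M = crs M.
Proof.
rewrite /cr /crs !big_split /=.
rewrite (card_pairs M (fun x y => [&& y \in M, (topz x.1 < topz y.1)%R & (botz y.2 < botz x.2)%R])).
rewrite (card_pairs M (fun x y => isolated_top M y && (topz y < topz x.1)%R)).
rewrite (card_pairs M (fun x y => isolated_bot M y && (botz y < botz x.2)%R)).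
congr (_ + _ + _)%N; apply: eq_bigr => e _.
- rewrite [RHS]big_mkcond /=; apply: eq_bigr => f _.
  by case: (f \in M) => //=; rewrite topz_lt botz_lt.
- by apply: eq_bigr => c _; rewrite topz_lt.
- by apply: eq_bigr => c _; rewrite botz_lt.
Qed.

Lemma genfun_Fg (R : fieldType) (q : R) alpha p j t :
  cr_genfun q alpha p j t = Fg q (alpha + j + p) (j + p) (alpha + j) j t.
Proof.
apply: eq_big => M; first by [].
by move=> _; rewrite cr_crs.
Qed.

Section QF.
Variables (R : realFieldType) (q : R).
Hypotheses (hq0 : (0 < q)%R) (hq1 : (q < 1)%R).
Local Open Scope ring_scope.
Local Notation qi := (qi q).
Local Notation gb := (gb q).
Local Notation ff := (ff q).

Definition qF n : R := \prod_(m < n) qi m.+1.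

Lemma q_neq1 : q != 1. Proof. by rewrite lt_eqF. Qed.

Lemma qint_qi n : qint q n = qi n.
Proof.
rewrite /qint /qi.
have h : 1 - q != 0 by rewrite subr_eq0 eq_sym q_neq1.
apply: (mulIf h); rewrite mulfVK //.
have := subrX1 q n; move=> E.
apply: (can_inj (@opprK _)); rewrite opprB E; ring.
Qed.

Lemma qfact_qF n : qfact q n = qF n.
Proof.
rewrite /qfact /qF big_add1 /= big_mkord; apply: eq_bigr => i _; exact: qint_qi.
Qed.

Lemma qi_add a b : qi (a + b) = qi a + q ^+ a * qi b.
Proof.
elim: b => [|b IH]; first by rewrite addn0 qi0 mulr0 addr0.
rewrite addnS /qi big_ord_recr /= -/(qi (a + b)) IH [in RHS]big_ord_recr /= -/(qi b).
by rewrite -/(qi a) exprD; ring.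
Qed.

Lemma qF_S n : qF n.+1 = qF n * qi n.+1.
Proof. by rewrite /qF big_ord_recr. Qed.

Lemma qi_gt0 n : 0 < qi n.+1.
Proof.
rewrite /qi big_ord_recl expr0 ltr_pwDl //; apply: sumr_ge0 => i _.
by apply: exprn_ge0; apply: ltW.
Qed.

Lemma qF_gt0 n : 0 < qF n.
Proof. by rewrite /qF; apply: prodr_gt0 => i _; apply: qi_gt0. Qed.

Lemma qF_neq0 n : qF n != 0.
Proof. by rewrite gt_eqF // qF_gt0. Qed.

Lemma gb_qF n k : (k <= n)%N -> gb n k * qF k * qF (n - k) = qF n.
Proof.
elim: n k => [|n IH] [|k] //=.
- by rewrite /qF !big_ord0 !mulr1.
- by rewrite subn0 /qF big_ord0 !mul1r.
rewrite ltnS => Hk; rewrite subSS.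
have E2 : gb n k * qF k.+1 * qF (n - k) = qF n * qi k.+1.
  by rewrite qF_S -(IH k Hk); ring.
case: (ltnP k n) => Hkn.
- have E1 : gb n k.+1 * qF k.+1 * qF (n - k) = qF n * qi (n - k).
    have -> : (n - k = (n - k.+1).+1)%N by lia.
    by rewrite (qF_S (n - k.+1)) -(IH k.+1 Hkn); ring.
  rewrite (qF_S n).
  have -> : qi n.+1 = qi k.+1 + q ^+ k.+1 * qi (n - k).
    by rewrite -qi_add; congr qi; lia.
  transitivity (q ^+ k.+1 * (gb n k.+1 * qF k.+1 * qF (n - k)) + gb n k * qF k.+1 * qF (n - k)).
    by ring.
  by rewrite E1 E2; ring.
- have -> : k = n by apply/eqP; rewrite eqn_leq Hk Hkn.
  rewrite gb_small // mulr0 add0r subnn.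
  have H := IH n (leqnn n); rewrite subnn in H.
  by rewrite (qF_S n) -[X in _ = X * _]H; ring.
Qed.

Lemma ff_qF m s : (s <= m)%N -> ff m s * qF (m - s) = qF m.
Proof.
elim: s m => [|s IH] [|m] //=.
- by rewrite ff0 mul1r subn0.
- by rewrite ff0 mul1r subn0.
rewrite ltnS => H; rewrite ffSS subSS qF_S -(IH m H); ring.
Qed.

Lemma ff_gb m s : (s <= m)%N -> ff m s = qF s * gb m s.
Proof.
move=> H; apply: (mulIf (qF_neq0 (m - s))); rewrite ff_qF // -(gb_qF H); ring.
Qed.

Lemma qbinom_gb n m : qbinom q n m = gb n m.
Proof.
rewrite /qbinom; case: leqP => H; last by rewrite gb_small.
rewrite !qfact_qF -(gb_qF H); field.
by rewrite qF_neq0 qF_neq0.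
Qed.

Lemma vandermonde B P T :
  gb (B + P) T = \sum_(k < T.+1) q ^+ ((B - k) * (T - k))%N * gb B k * gb P (T - k)%N.
Proof.
elim: B T => [|B IH] T.
  rewrite big_ord_recl big1 ?addr0; last first.
    by move=> i _; rewrite (@gb_small _ q 0) ?mulr0 ?mul0r // lift0.
  by rewrite /= !subn0 !mul0n expr0 mul1r mul1r add0n.
case: T => [|T].
  by rewrite big_ord_recl big_ord0 addr0 /= !gbn0 !mulr1 muln0 expr0.
rewrite addSn gbSS !IH big_ord_recl [RHS]big_ord_recl mulrDr -addrA; congr (_ + _).
  rewrite /= !subn0 !gbn0 !mulr1 mulrA -exprD.
  by congr (_ ^+ _ * _); rewrite mulSn.
rewrite (big_distrr (q ^+ T.+1)) -big_split /=; apply: eq_bigr => j _.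
rewrite /bump leq0n add1n !add0n !subSS.
set X := gb P _.
case: (ltnP j B) => HjB; last first.
  rewrite (@gb_small _ q B j.+1) ?ltnS // !mulr0 !mul0r add0r ?addr0 mulr0 add0r.
  by [].
have Hjt : (j <= T)%N by rewrite -ltnS.

transitivity (q ^+ T.+1 * q ^+ ((B - j.+1) * (T - j)) * (gb B j.+1 * X)
   + q ^+ ((B - j) * (T - j)) * (gb B j * X)).
  by ring.
have -> : q ^+ T.+1 * q ^+ ((B - j.+1) * (T - j)) = q ^+ ((B - j) * (T - j)) * q ^+ j.+1.
  rewrite -!exprD; congr (_ ^+ _).
  have -> : (B - j = (B - j.+1).+1)%N by lia.
  rewrite mulSn; lia.
ring.
Qed.

End QF.

Local Open Scope ring_scope.

Lemma triangle (R : nmodType) (F : nat -> nat -> R) n :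
  \sum_(l < n) \sum_(i < l.+1) F l i = \sum_(i < n) \sum_(k < n - i) F (i + k)%N i.
Proof.
elim: n => [|n IH]; first by rewrite !big_ord0.
rewrite big_ord_recr /= IH.
transitivity (\sum_(i < n.+1) (\sum_(k < n - i) F (i + k)%N i + F n i)).
  rewrite big_split /= [in RHS]big_ord_recr /=.
  rewrite [X in _ = _ + X + _]big1 ?addr0 //.
  by move=> k _; have := ltn_ord k; move: (nat_of_ord k) => x; lia.
apply: eq_bigr => i _.
have Hi : (i <= n)%N by rewrite -ltnS.
rewrite subSn // big_ord_recr /=; congr (_ + _); congr (F _ _); lia.
Qed.

Lemma zexpo (i k t j alpha : nat) : (k <= j)%N -> (i <= alpha + j)%N -> (i + k <= t)%N ->
 (i%:Z * ((i + k)%N%:Z - i%:Z) + (t%:Z - i%:Z) * (j%:Z - i%:Z + alpha%:Z)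
   + (j%:Z - (i + k)%N%:Z + i%:Z) * (t%:Z - (i + k)%N%:Z + i%:Z))%R
 = Posz (i * k + (t - i) * (alpha + j - i) + (j - k) * (t - k))%N.
Proof.
move=> H1 H2 H3.
have [a Ha] : exists a, j = (k + a)%N by exists (j - k)%N; lia.
subst j.
have [b Hb] : exists b, t = (i + k + b)%N by exists (t - (i + k))%N; lia.
subst t.
have [c Hc] : exists c, (alpha + (k + a) = i + c)%N by exists (alpha + (k + a) - i)%N; lia.
rewrite Hc.
have -> : (i + k + b - i = k + b)%N by lia.
have -> : (i + c - i = c)%N by lia.
have -> : (k + a - k = a)%N by lia.
have -> : (i + k + b - k = i + b)%N by lia.
have E : (alpha%:Z = (i + c)%N%:Z - (k + a)%N%:Z)%R by rewrite -Hc PoszD addrK.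
rewrite E !PoszD !PoszM !PoszD.
ring.
Qed.

Lemma divE (R : fieldType) (x a b : R) : a != 0 -> x * a = b -> x = b / a.
Proof. by move=> ha <-; rewrite mulfK. Qed.

Unset Implicit Arguments.
Theorem mainTheorem12 (R : realFieldType) (q : R) (hq0 : 0 < q) (hq1 : q < 1)
    (alpha p j t : nat) (htp : (t <= p)%N) :
  cr_genfun q alpha p j t =
  \sum_(l < t.+1) \sum_(i < l.+1)
    q ^ ((i%:Z * (l%:Z - i%:Z)) + (t%:Z - i%:Z) * (j%:Z - i%:Z + alpha%:Z)
         + (j%:Z - l%:Z + i%:Z) * (t%:Z - l%:Z + i%:Z))%R
    * (qfact q (t - l + i) * qfact q (t - i) / qfact q (t - l))
    * qbinom q p (t - i) * qbinom q p (t - l + i)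
    * qbinom q (alpha + j) i * qbinom q j (l - i).
Proof.
have QF := qfact_qF hq1.
have QB := qbinom_gb hq0 hq1.
have NZ := qF_neq0 hq0.
rewrite genfun_Fg expandA.
rewrite (triangle (fun l i : nat =>
    q ^ ((i%:Z * (l%:Z - i%:Z)) + (t%:Z - i%:Z) * (j%:Z - i%:Z + alpha%:Z)
         + (j%:Z - l%:Z + i%:Z) * (t%:Z - l%:Z + i%:Z))%R
    * (qfact q (t - l + i) * qfact q (t - i) / qfact q (t - l))
    * qbinom q p (t - i) * qbinom q p (t - l + i)
    * qbinom q (alpha + j) i * qbinom q j (l - i))).
apply: eq_bigr => i _.
have Hit : (i <= t)%N by rewrite -ltnS.
have Hip : (i <= p)%N by lia.
rewrite Fg_G (ff_gb hq0 hq1 (_ : (t - i <= j + p - i)%N)); last by lia.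
set A := (alpha + j)%N.
transitivity (q ^+ ((A - i) * (t - i) + i * j) * ff q p i * gb q A i * qF q (t - i) * gb q p (t - i)
   * gb q (j + (p - i)) (t - i)).
  rewrite (_ : (j + p - i = j + (p - i))%N); last by lia.
  ring.
rewrite (vandermonde hq0 hq1) big_distrr subSn //=.
apply: eq_bigr => k _.
have Hk : (k <= t - i)%N by rewrite -ltnS.
rewrite (_ : (t - (i + k) + i = t - k)%N); last by lia.
rewrite (_ : (t - (i + k) = t - i - k)%N); last by lia.
rewrite addKn !QF !QB.
case: (leqP k j) => Hkj; last by rewrite (@gb_small _ q j k) //; ring.
case: (leqP i A) => HiA; last by rewrite (@gb_small _ q A i) //; ring.
rewrite zexpo //; last by lia.
have E : q ^ (i * k + (t - i) * (alpha + j - i) + (j - k) * (t - k))%N =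
   q ^+ ((A - i) * (t - i) + i * j) * q ^+ ((j - k) * (t - i - k)).
  transitivity (q ^+ (i * k + (t - i) * (alpha + j - i) + (j - k) * (t - k))); first by [].
  rewrite -exprD; congr (_ ^+ _); rewrite /A; nia.
have Eff : ff q p i = qF q p / qF q (p - i) := divE (NZ _) (ff_qF q Hip).
have Egb1 : gb q (p - i) (t - i - k) = qF q (p - i) / (qF q (t - i - k) * qF q (p - (t - k))).
  apply: divE; first by rewrite mulf_neq0.
  rewrite mulrA (_ : (p - (t - k) = (p - i) - (t - i - k))%N); last by lia.
  by apply: (gb_qF hq0 hq1); lia.
have Egb2 : gb q p (t - k) = qF q p / (qF q (t - k) * qF q (p - (t - k))).
  apply: divE; first by rewrite mulf_neq0.
  by rewrite mulrA; apply: (gb_qF hq0 hq1); lia.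
rewrite E Eff Egb1 Egb2.
by field; rewrite !NZ.
Qed.
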